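(* Let $f:E\to X$ be a fibrewise pointed map between fibrewise well-pointed spaces over $B$, and assume that either $E$ and $X$ are normal spaces, or $f$ is a closed fibrewise cofibration and $X$ is normal. Then $$\mathrm{secat}_B(f)\le\mathrm{secat}^B_B(f)\le\mathrm{secat}_B(f)+1.$$
   Context: Fibrewise space over $B$: a space $X$ with a map $p_X:X\to B$; fibrewise map: $f$ with $p_Yf=p_X$. Fibrewise pointed space: fibrewise space with a section $s_X:B\to X$ of $p_X$; fibrewise pointed map: fibrewise map with $fs_X=s_Y$. The fibrewise cylinder $I_B(X)$ is $X\times[0,1]$ with projection $(x,t)\mapsto p_X(x)$; a fibrewise homotopy is a fibrewise map $I_B(X)\to Y$ ($\simeq_B$). A fibrewise pointed homotopy between fibrewise pointed maps is a fibrewise homotopy $H$ with $H(s_X(b),t)=s_Y(b)$ for all $b,t$ ($\simeq^B_B$). A fibrewise map $j:A\to X$ is a fibrewise cofibration if it has the homotopy extension property for fibrewise homotopies (for all fibrewise $g:X\to Y$, $H:I_B(A)\to Y$ with $H(-,0)=gj$ there is $\tilde H:I_B(X)\to Y$ with $\tilde H(-,0)=g$, $\tilde H\circ(j\times\mathrm{id})=H$); it is closed if $j(A)$ is closed. $X$ is fibrewise well-pointed if $s_X$ is a closed fibrewise cofibration. $\mathrm{secat}_B(f)$: least $n$ such that $X$ is covered by $n+1$ open sets $U$ each with a fibrewise map $s:U\to E$ with $fs\simeq_B$ the inclusion $U\hookrightarrow X$. $\mathrm{secat}^B_B(f)$: least $n$ such that $X$ is covered by $n+1$ open sets $U$, each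 containing $s_X(B)$ (so a fibrewise pointed space with section $s_X$) and each admitting a fibrewise pointed map $s:U\to E$ with $fs\simeq^B_B$ the inclusion $U\hookrightarrow X$. Both are $\infty$ if no such $n$ exists. *)

(* Defs.v *)
From HB Require Import structures.
From mathcomp Require Import all_boot all_order all_algebra.
From mathcomp Require Import all_classical all_reals all_analysis.
From mathcomp Require Import Rstruct Rstruct_topology.
Set Implicit Arguments. Unset Strict Implicit. Unset Printing Implicit Defensive.
Import Order.TTheory GRing.Theory Num.Theory.
Local Open Scope classical_set_scope.
Local Open Scope ring_scope.

Definition unitI : set Rdefinitions.R := `[0, 1]%classic.

Section Fibrewise.
Variable B : topologicalType.

Definition fib_space (X : topologicalType) (pX : X -> B) : Prop := continuous pX.

Definition fib_pointed_space (X : topologicalType) (pX : X -> B) (sX : B -> X) : Prop :=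
  continuous pX /\ continuous sX /\ (forall b, pX (sX b) = b).

Definition fib_map (X Y : topologicalType) (pX : X -> B) (pY : Y -> B) (g : X -> Y) :=
  continuous g /\ (forall x, pY (g x) = pX x).

(* Fibrewise cofibration: homotopy extension property for fibrewise homotopies
   I_B(A) = A x [0,1] -> Y, for every fibrewise space Y over B. *)
Definition fib_cofibration (A X : topologicalType) (pA : A -> B) (pX : X -> B)
    (j : A -> X) : Prop :=
  fib_map pA pX j /\
  forall (Y : topologicalType) (pY : Y -> B), fib_space pY ->
  forall (g : X -> Y), fib_map pX pY g ->
  forall (H : A * Rdefinitions.R -> Y),
    {within [set: A] `*` unitI, continuous H} ->
    (forall a t, unitI t -> pY (H (a, t)) = pA a) ->
    (forall a, H (a, 0) = g (j a)) ->
  exists Ht : X * Rdefinitions.R -> Y,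
    [/\ {within [set: X] `*` unitI, continuous Ht},
        (forall x t, unitI t -> pY (Ht (x, t)) = pX x),
        (forall x, Ht (x, 0) = g x) &
        (forall a t, unitI t -> Ht (j a, t) = H (a, t))].

Definition closed_fib_cofibration (A X : topologicalType) (pA : A -> B)
    (pX : X -> B) (j : A -> X) : Prop :=
  fib_cofibration pA pX j /\ closed (range j).

(* X is fibrewise well-pointed: the section is a closed fibrewise cofibration,
   B being regarded as a fibrewise space over itself via the identity. *)
Definition fib_well_pointed (X : topologicalType) (pX : X -> B) (sX : B -> X) :=
  closed_fib_cofibration id pX sX.

(* Fibrewise map s : U -> E on an (open) subset U of X, given as a total
   function whose values outside U are irrelevant. *)
Definition fib_map_on (X E : topologicalType) (pX : X -> B) (pE : E -> B)
    (U : set X) (s : X -> E) : Prop :=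
  {within U, continuous s} /\ (forall x, U x -> pE (s x) = pX x).

Definition fib_homotopic_incl_on (X E : topologicalType) (pX : X -> B)
    (f : E -> X) (U : set X) (s : X -> E) (H : X * Rdefinitions.R -> X) : Prop :=
  [/\ {within U `*` unitI, continuous H},
      (forall x t, U x -> unitI t -> pX (H (x, t)) = pX x),
      (forall x, U x -> H (x, 0) = f (s x)) &
      (forall x, U x -> H (x, 1) = x)].

Definition secatB_le (E X : topologicalType) (pE : E -> B) (pX : X -> B)
    (f : E -> X) (n : nat) : Prop :=
  exists U : nat -> set X,
    [/\ (forall i, (i <= n)%N -> open (U i)),
        (forall x, exists2 i, (i <= n)%N & U i x) &
        (forall i, (i <= n)%N -> exists s : X -> E,
           fib_map_on pX pE (U i) s /\
           exists H, fib_homotopic_incl_on pX f (U i) s H)].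

Definition secatBB_le (E X : topologicalType) (pE : E -> B) (pX : X -> B)
    (sE : B -> E) (sX : B -> X) (f : E -> X) (n : nat) : Prop :=
  exists U : nat -> set X,
    [/\ (forall i, (i <= n)%N -> open (U i)),
        (forall x, exists2 i, (i <= n)%N & U i x),
        (forall i, (i <= n)%N -> forall b, U i (sX b)) &
        (forall i, (i <= n)%N -> exists s : X -> E,
           [/\ fib_map_on pX pE (U i) s,
               (forall b, s (sX b) = sE b) &
               exists H, fib_homotopic_incl_on pX f (U i) s H /\
                 (forall b t, unitI t -> H (sX b, t) = sX b)])].

End Fibrewise.

(* Extended natural numbers: None stands for infinity. *)
Definition enat_le (a b : option nat) : Prop :=
  match a, b with
  | _, None => True
  | None, Some _ => False
  | Some m, Some n => (m <= n)%N
  end.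

Definition enat_succ (a : option nat) : option nat := omap S a.

Definition least_nat (P : nat -> Prop) : option nat :=
  match pselect (exists n, `[< P n >]) with
  | left h => Some (ex_minn h)
  | right _ => None
  end.

Definition secatB (B E X : topologicalType) (pE : E -> B) (pX : X -> B)
    (f : E -> X) : option nat := least_nat (secatB_le pE pX f).

Definition secatBB (B E X : topologicalType) (pE : E -> B) (pX : X -> B)
    (sE : B -> E) (sX : B -> X) (f : E -> X) : option nat :=
  least_nat (secatBB_le pE pX sE sX f).

(* Main.v *)
Require Import Defs.
From HB Require Import structures.
From mathcomp Require Import all_boot all_order all_algebra.
From mathcomp Require Import all_classical all_reals all_analysis.
From mathcomp Require Import Rstruct Rstruct_topology.
From mathcomp Require Import lra.

Section Helpers.
Set Implicit Arguments. Unset Strict Implicit. Unset Printing Implicit Defensive.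
Import Order.TTheory GRing.Theory Num.Theory.
Local Open Scope classical_set_scope.
Local Open Scope ring_scope.

Lemma within_comp (T1 T2 T3 : topologicalType) (S : set T1) (A : set T2)
  (phi : T1 -> T2) (h : T2 -> T3) :
  {within S, continuous phi} -> (forall x, S x -> A (phi x)) ->
  {within A, continuous h} -> {within S, continuous (h \o phi)}.
Proof.
move=> /subspace_continuousP cphi SA /subspace_continuousP ch.
apply/subspace_continuousP => x Sx.
have Ax := SA x Sx.
apply: cvg_comp (ch _ Ax).
move=> W /=; rewrite /within/= => nW.
suff : nbhs x (fun y => S y -> W (phi y)) by [].
have H : nbhs x (fun y => S y -> A (phi y) -> W (phi y)) := cphi x Sx _ nW.
by apply: filterS H => y Hy Sy; exact: Hy Sy (SA y Sy).
Qed.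

Lemma within_eq (T U : topologicalType) (A : set T) (f g : T -> U) :
  {within A, continuous f} -> (forall x, A x -> f x = g x) ->
  {within A, continuous g}.
Proof.
move=> cf fg; apply: (subspace_eq_continuous _ cf) => x.
by rewrite inE => /fg.
Qed.

Lemma glue_within (T U : topologicalType) (S O1 O2 : set T) (f : T -> U) :
  open O1 -> open O2 ->
  {within S `&` O1, continuous f} -> {within S `&` O2, continuous f} ->
  {within S `&` (O1 `|` O2), continuous f}.
Proof.
move=> oO1 oO2 /subspace_continuousP c1 /subspace_continuousP c2.
apply/subspace_continuousP => x [Sx [hO1 | hO2]] V nV.
- have H : nbhs x (fun y => (S `&` O1) y -> V (f y)) := c1 x (conj Sx hO1) V nV.
  have HO : nbhs x O1 by apply: open_nbhs_nbhs.
  suff : nbhs x (fun y => (S `&` (O1 `|` O2)) y -> V (f y)) by [].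
  by apply: filterS2 HO H => y O1y Hy [Sy _]; exact: Hy.
- have H : nbhs x (fun y => (S `&` O2) y -> V (f y)) := c2 x (conj Sx hO2) V nV.
  have HO : nbhs x O2 by apply: open_nbhs_nbhs.
  suff : nbhs x (fun y => (S `&` (O1 `|` O2)) y -> V (f y)) by [].
  by apply: filterS2 HO H => y O2y Hy [Sy _]; exact: Hy.
Qed.

Lemma cont_into_set_type (T U : topologicalType) (A : set U) (f : T -> set_type A) :
  continuous (set_val \o f) -> continuous f.
Proof. move=> h. exact: (@continuous_comp_initial _ _ _ set_val f). Qed.

Lemma set_val_cont (U : topologicalType) (A : set U) : continuous (@set_val _ A).
Proof. exact: initial_continuous. Qed.

Lemma cont_fst (X Y : topologicalType) : continuous (@fst X Y).
Proof. move=> p; exact: cvg_fst. Qed.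
Lemma cont_snd (X Y : topologicalType) : continuous (@snd X Y).
Proof. move=> p; exact: cvg_snd. Qed.
Lemma cont_pair (T U V : topologicalType) (f : T -> U) (g : T -> V) :
  continuous f -> continuous g -> continuous (fun x => (f x, g x)).
Proof. by move=> cf cg x; apply: cvg_pair; [exact: cf|exact: cg]. Qed.
Lemma cont_1m : continuous (fun t : Rdefinitions.R => 1 - t).
Proof. move=> t. Fail apply: cvgB. apply: (@continuousB _ Rdefinitions.R^o _ (fun=> 1) id); [exact: cst_continuous | exact: cvg_id]. Qed.

Lemma cont_comp (T U V : topologicalType) (f : T -> U) (g : U -> V) :
  continuous f -> continuous g -> continuous (g \o f).
Proof. by move=> cf cg x; exact: continuous_comp (cf x) (cg (f x)). Qed.

Lemma cont_val (Z : topologicalType) (A : set Z) : continuous (fun y : set_type A => val y).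
Proof. rewrite -set_valE; exact: set_val_cont. Qed.

Lemma cont_val_fst (Z W V : topologicalType) (A : set (Z * W)) (p : Z -> V) :
  continuous p -> continuous (fun y : set_type A => p (val y).1).
Proof.
move=> cp; apply: (@cont_comp _ _ _ (fun y : set_type A => (val y).1) p) => //.
exact: (@cont_comp _ _ _ (fun y : set_type A => val y) fst (@cont_val _ A) (@cont_fst _ _)).
Qed.
Local Notation RR := Rdefinitions.R.

Lemma unitI0 : unitI 0. Proof. by rewrite /unitI /= in_itv /= lexx ler01. Qed.
Lemma unitI1 : unitI 1. Proof. by rewrite /unitI /= in_itv /= lexx ler01. Qed.
Lemma unitI1m (t : RR) : unitI t -> unitI (1 - t).
Proof. rewrite /unitI /= !in_itv /= => /andP[h1 h2]; apply/andP; split; lra. Qed.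

Lemma deform_nbhs (B X : topologicalType) (pX : X -> B) (sX : B -> X) :
  fib_pointed_space pX sX -> fib_cofibration id pX sX ->
  exists (N : set X) (D : X * RR -> X),
   [/\ open N, (forall b, N (sX b)), {within N `*` unitI, continuous D} &
       (forall x t, N x -> unitI t -> pX (D (x,t)) = pX x)] /\ [/\
       (forall x, N x -> D (x,0) = sX (pX x)),
       (forall x, N x -> D (x,1) = x) &
       (forall b t, unitI t -> D (sX b, t) = sX b)].
Proof.
move=> [cpX [csX psX]] [_ hep].
pose Cyl : set (X * RR) := [set p | p.2 = 0 \/ range sX p.1].
pose pY : set_type Cyl -> B := fun y => pX (val y).1.
have cpY : continuous pY by exact: cont_val_fst.
pose gY : X -> set_type Cyl := fun x => @SigSub _ _ Cyl (x, 0) (mem_set (or_introl erefl : Cyl (x, 0))).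
pose HY : B * RR -> set_type Cyl := fun bt =>
  @SigSub _ _ Cyl (sX bt.1, bt.2) (mem_set (or_intror (imageT sX bt.1) : Cyl (sX bt.1, bt.2))).
have cgY : continuous gY.
  apply: cont_into_set_type; rewrite set_valE.
  suff : continuous (fun x : X => (x, 0 : RR)) by [].
  apply: cont_pair; [exact: (fun x => cvg_id) | exact: cst_continuous].
have cHY : continuous HY.
  apply: cont_into_set_type; rewrite set_valE.
  suff : continuous (fun bt : B * RR => (sX bt.1, bt.2)) by [].
  apply: (@cont_pair _ _ _ (fun bt : B * RR => sX bt.1) snd).
    exact: (@cont_comp _ _ _ fst sX (@cont_fst _ _) csX).
  exact: cont_snd.
have := hep (set_type Cyl) pY cpY gY (conj cgY (fun x => erefl)) HY
  (continuous_subspaceT cHY) (fun b t _ => psX b) (fun b => @val_inj _ _ _ (HY (b, 0)) (gY (sX b)) erefl).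
move=> [Ht [cHt fHt Ht0 Htj]].
pose a := fun p => (val (Ht p)).1.
pose c := fun p => (val (Ht p)).2.
have Hcyl p : c p = 0 \/ range sX (a p).
  have := valP (Ht p); rewrite inE; exact.
have ca : {within [set: X] `*` unitI, continuous a}.
  apply: (@within_comp _ _ _ _ [set: set_type Cyl] Ht (fun y => (val y).1) cHt) => //.
  apply: continuous_subspaceT.
  exact: (@cont_comp _ _ _ (fun y : set_type Cyl => val y) fst (@cont_val _ Cyl) (@cont_fst _ _)).
have cc : {within [set: X] `*` unitI, continuous c}.
  apply: (@within_comp _ _ _ _ [set: set_type Cyl] Ht (fun y => (val y).2) cHt) => //.
  apply: continuous_subspaceT.
  exact: (@cont_comp _ _ _ (fun y : set_type Cyl => val y) snd (@cont_val _ Cyl) (@cont_snd _ _)).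
have cc1 : continuous (fun x => c (x, 1)).
  apply/continuous_subspace_setT.
  apply: (@within_comp _ _ _ _ ([set: X] `*` unitI) (fun x => (x, 1)) c) => //.
    apply: continuous_subspaceT.
    by apply: cont_pair; [exact: (fun x => cvg_id) | exact: cst_continuous].
  by move=> x _; split => //; exact: unitI1.
exists [set x | 0 < c (x, 1)], (fun p => a (p.1, 1 - p.2)).
split; split.
- exact: ((continuousP _).1 cc1 _ (@open_gt _ 0)).
- move=> b /=; rewrite /c Htj; last exact: unitI1.
  by rewrite /= ltr01.
- apply: (@within_comp _ _ _ ([set x | 0 < c (x, 1)] `*` unitI) ([set: X] `*` unitI) (fun p : X * RR => (p.1, 1 - p.2)) a); last exact: ca.
    apply: continuous_subspaceT.
    apply: cont_pair; first exact: cont_fst.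
    exact: (@cont_comp _ _ _ snd (fun t : RR => 1 - t) (@cont_snd _ _) cont_1m).
  by move=> [x t] [_ /= It]; split => //; exact: unitI1m.
- move=> x t Nx It /=.
  exact: (fHt x (1 - t) (unitI1m It)).
- move=> x /= Nx; rewrite subr0.
  case: (Hcyl (x, 1)) => [c0|[b _ eb]].
    by move: Nx; rewrite c0 ltxx.
  have : pX (a (x, 1)) = pX x := fHt x 1 unitI1.
  by rewrite -eb psX => <-.
- move=> x /= Nx; rewrite subrr /a Ht0 //.
- move=> b t It /=; rewrite /a Htj //; exact: unitI1m.
Qed.

Lemma least_mono (P Q : nat -> Prop) :
  (forall n, Q n -> P n) -> enat_le (least_nat P) (least_nat Q).
Proof.
move=> QP; rewrite /least_nat.
case: pselect => [hP|nP]; case: pselect => [hQ|nQ] //=.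
- case: ex_minnP => m Pm minP; case: ex_minnP => k Qk minQ.
  apply: minP; apply/asboolP; apply: QP; exact/asboolP.
- case: hQ => k /asboolP Qk; apply: nP; exists k; apply/asboolP; exact: QP.
Qed.

Lemma least_succ (P Q : nat -> Prop) :
  (forall n, P n -> Q n.+1) -> enat_le (least_nat Q) (enat_succ (least_nat P)).
Proof.
move=> PQ; rewrite /least_nat.
case: pselect => [hQ|nQ]; case: pselect => [hP|nP] //=.
- case: ex_minnP => m Qm minQ; case: ex_minnP => k Pk minP.
  apply: minQ; apply/asboolP; apply: PQ; exact/asboolP.
- case: hP => k /asboolP Pk; apply: nQ; exists k.+1; apply/asboolP; exact: PQ.
Qed.

Lemma glue_plain (T U : topologicalType) (A1 A2 : set T) (f : T -> U) :
  open A1 -> open A2 -> {within A1, continuous f} -> {within A2, continuous f} ->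
  {within A1 `|` A2, continuous f}.
Proof.
move=> o1 o2 c1 c2.
have := @glue_within T U setT A1 A2 f o1 o2; rewrite !setTI; exact.
Qed.

Lemma glue_prod (T V U : topologicalType) (A1 A2 : set T) (I : set V) (f : T * V -> U) :
  open A1 -> open A2 -> {within A1 `*` I, continuous f} -> {within A2 `*` I, continuous f} ->
  {within (A1 `|` A2) `*` I, continuous f}.
Proof.
move=> o1 o2 c1 c2.
have eq k : (setT `*` I) `&` (fst @^-1` k) = k `*` I.
  by apply/seteqP; split => -[x t] /=; [move=> [[_ ?] ?]|move=> [? ?]].
have eq2 : (setT `*` I) `&` (fst @^-1` A1 `|` fst @^-1` A2) = (A1 `|` A2) `*` I.
  by apply/seteqP; split => -[x t] /=; [move=> [[_ ?] ?]|move=> [? ?]].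
rewrite -eq2; apply: glue_within.
- exact: ((continuousP _).1 (@cont_fst T V) _ o1).
- exact: ((continuousP _).1 (@cont_fst T V) _ o2).
- by rewrite eq.
- by rewrite eq.
Qed.

Lemma main_step (B E X : topologicalType) (pE : E -> B) (sE : B -> E)
    (pX : X -> B) (sX : B -> X) (f : E -> X) (n : nat) :
  fib_pointed_space pE sE -> fib_pointed_space pX sX ->
  (forall b, f (sE b) = sX b) -> fib_well_pointed pX sX -> normal_space X ->
  secatB_le pE pX f n -> secatBB_le pE pX sE sX f n.+1.
Proof.
move=> [cpE [csE psE]] hX hf [cof clX] nX [U [oU covU secU]].
have psX := proj2 (proj2 hX).
have cpX := proj1 hX.
have [N [D [[oN NsX cD fD] [D0 D1 Dsx]]]] := deform_nbhs hX cof.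
have [M [oM MsX clMN]] : exists M : set X,
    [/\ open M, (forall b, M (sX b)) & closure M `<=` N].
  have snN : set_nbhs (range sX) N.
    apply/set_nbhsP; exists N; split => // _ [b _ <-]; exact: NsX.
  have [C snC clCN] := nX _ clX N snN.
  have /set_nbhsP [M [oM rM MC]] := snC.
  exists M; split => //.
    move=> b; apply: rM; exact: imageT.
  apply: subset_trans clCN; exact: closureS.
have MN : M `<=` N := subset_trans (@subset_closure _ M) clMN.
have csp : continuous (sE \o pX) := cont_comp cpX csE.
exists (fun i => if (i <= n)%N then (U i `\` closure M) `|` M else N).
split.
- move=> i _; case: ifP => [iln|_]; last exact: oN.
  apply: openU; last exact: oM.
  rewrite setDE; apply: openI; [exact: oU | apply: closed_openC; exact: closed_closure].
- move=> x; case: (pselect (closure M x)) => [cx|ncx].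
    by exists n.+1 => //; rewrite ltnn; exact: clMN.
  have [i iln Uix] := covU x; exists i; first exact: leqW.
  by rewrite iln; left.
- move=> i _ b; case: ifP => _; [right|]; [exact: MsX | exact: NsX].
- move=> i _; case: ifP => [iln|_].
  + have [s [[cs fs] [H [cH fH H0 H1]]]] := secU i iln.
    exists (fun x => if pselect (M x) then sE (pX x) else s x); split.
    * split.
      - apply: glue_plain; [|exact: oM| |].
        + rewrite setDE; apply: openI; [exact: oU | apply: closed_openC; exact: closed_closure].
        + apply: (within_eq (f := s)).
            by apply: continuous_subspaceW cs => x [].
          move=> x [_ ncl]; case: pselect => // Mx.
          by exfalso; exact: ncl (subset_closure Mx).
        + apply: (within_eq (f := sE \o pX)); first exact: continuous_subspaceT.
          by move=> x Mx; case: pselect.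
      - move=> x Ux; case: pselect => Mx; first by rewrite psE.
        by case: Ux => [[Uix _]|//]; exact: fs.
    * move=> b; case: (pselect (M (sX b))) => [Mb|nM]; first by rewrite psX.
      by exfalso; exact: nM (MsX b).
    * exists (fun p => if pselect (M p.1) then D p else H p); split; first split.
      - apply: glue_prod; [|exact: oM| |].
        + rewrite setDE; apply: openI; [exact: oU | apply: closed_openC; exact: closed_closure].
        + apply: (within_eq (f := H)).
            by apply: continuous_subspaceW cH => -[x t] [[? _] ?].
          move=> [x t] [[_ ncl] _] /=; case: pselect => // Mx.
          by exfalso; exact: ncl (subset_closure Mx).
        + apply: (within_eq (f := D)).
            by apply: continuous_subspaceW cD => -[x t] [/MN ? ?].
          by move=> [x t] [Mx _] /=; case: pselect.
      - move=> x t Ux It /=; case: pselect => Mx /=; first by apply: fD => //; exact: MN.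
        case: Ux => [[Uix _]|//]. exact: fH.
      - move=> x Ux /=; case: pselect => Mx; first by rewrite D0 ?hf //; exact: MN.
        by case: Ux => [[Uix _]|//]; exact: H0.
      - move=> x Ux /=; case: pselect => Mx; first by rewrite D1 //; exact: MN.
        by case: Ux => [[Uix _]|//]; exact: H1.
      - move=> b t It /=; case: (pselect (M (sX b))) => [Mb|nM]; first exact: Dsx.
        by exfalso; exact: nM (MsX b).
  + exists (fun x => sE (pX x)); split.
    * split; first exact: continuous_subspaceT.
      by move=> x _; rewrite psE.
    * by move=> b; rewrite psX.
    * exists D; split; first split => //.
      - by move=> x Nx; rewrite D0 // hf.
      - exact: Dsx.
Qed.

Lemma pointed_to_unpointed (B E X : topologicalType) (pE : E -> B) (sE : B -> E)
    (pX : X -> B) (sX : B -> X) (f : E -> X) (n : nat) :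
  secatBB_le pE pX sE sX f n -> secatB_le pE pX f n.
Proof.
move=> [U [oU covU _ secU]]; exists U; split => // i iln.
have [s [fs _ [H [hH _]]]] := secU i iln.
by exists s; split => //; exists H.
Qed.

End Helpers.

Theorem theorem4p1 (B E X : topologicalType)
    (pE : E -> B) (sE : B -> E) (pX : X -> B) (sX : B -> X) (f : E -> X) :
  fib_pointed_space pE sE ->
  fib_pointed_space pX sX ->
  fib_map pE pX f ->
  (forall b, f (sE b) = sX b) ->
  fib_well_pointed pE sE ->
  fib_well_pointed pX sX ->
  ((normal_space E /\ normal_space X) \/
   (closed_fib_cofibration pE pX f /\ normal_space X)) ->
  enat_le (secatB pE pX f) (secatBB pE pX sE sX f) /\
  enat_le (secatBB pE pX sE sX f) (enat_succ (secatB pE pX f)).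
Proof.
move=> hE hX _ hf _ wX hn.
have nX : normal_space X by case: hn => -[].
split.
- apply: least_mono => n; exact: pointed_to_unpointed.
- apply: least_succ => n; exact: main_step.
Qed.
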